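(* Let $n\ge 1$ and $N=2^n$. Let $H=\frac{1}{\sqrt2}\begin{bmatrix}1&1\\1&-1\end{bmatrix}$ be the Hadamard matrix and let $Z_{2N}$ be the $2N\times 2N$ cyclic downshift matrix, i.e. $Z_{2N}\ket{j}=\ket{(j+1)\bmod 2N}$ for $j=0,\dots,2N-1$. Define the block-diagonal unitary $$Z_{\rm block}=\sum_{k=0}^{N-1}\ket{k}\bra{k}\otimes Z_{2N}^{\,k}\in\mathbb{C}^{N\cdot 2N\times N\cdot 2N},$$ (first tensor factor: an $n$-qubit register indexed by $k\in\{0,\dots,N-1\}$; second factor: an $(n+1)$-qubit register indexed by $\{0,\dots,2N-1\}$), and $$U_L=(H^{\otimes n}\otimes I_{2N})\,Z_{\rm block}\,(H^{\otimes n}\otimes I_{2N}).$$ Let $L$ be the $N\times N$ lower triangular matrix with all entries on and below the diagonal equal to $1$ and all entries above the diagonal equal to $0$. Then for all $i,j\in\{0,\dots,N-1\}$, $$(\bra{0^n}\otimes\bra{i})\,U_L\,(\ket{0^n}\otimes\ket{j})=\frac{1}{N}L_{ij},$$ where $\ket{i},\ket{j}$ denote standard basis vectors of $\mathbb{C}^{2N}$ (so the indices $i,j<N$ correspond to the most significant qubit of the second register being $0$). In other words, $U_L$ is an $(N,\log_2 N+1,0)$-block encoding of $L$. *)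

(* Defs.v *)
(* Kronecker product: mathcomp.real_closed.mxtens (A *t B),
   first factor = most significant index: (A *t B) (i*p+j) (k*q+l) = A i k * B j l. *)
From mathcomp Require Import all_boot all_order all_algebra.
From mathcomp Require Export mxtens.
Set Implicit Arguments. Unset Strict Implicit. Unset Printing Implicit Defensive.
Import GRing.Theory Num.Theory.
Local Open Scope ring_scope.

Section QDefs.
Variable C : numClosedFieldType.

Definition hadamard : 'M[C]_2 :=
  (sqrtC 2)^-1 *: \matrix_(i < 2, j < 2) (if (i == 1%N :> nat) && (j == 1%N :> nat) then -1 else 1).

Fixpoint hadamard_pow (n : nat) : 'M[C]_(2 ^ n) :=
  match n return 'M[C]_(2 ^ n) with
  | 0 => 1%:M
  | n'.+1 => castmx (esym (expnS 2 n'), esym (expnS 2 n')) (hadamard *t hadamard_pow n')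
  end.

Definition downshift (m : nat) : 'M[C]_m :=
  \matrix_(i < m, j < m) (if (i : nat) == ((j.+1) %% m)%N then 1 else 0).

Definition Zblock (n : nat) : 'M[C]_(2 ^ n * (2 * 2 ^ n)) :=
  \sum_(k < 2 ^ n) (delta_mx k k : 'M[C]_(2 ^ n)) *t (downshift (2 * 2 ^ n)) ^+ k.

Definition UL (n : nat) : 'M[C]_(2 ^ n * (2 * 2 ^ n)) :=
  (hadamard_pow n *t (1%:M : 'M[C]_(2 * 2 ^ n))) *m Zblock n
    *m (hadamard_pow n *t (1%:M : 'M[C]_(2 * 2 ^ n))).

Definition lower_ones (N : nat) : 'M[C]_N :=
  \matrix_(i < N, j < N) (if (j <= i)%N then 1 else 0).

End QDefs.

Definition ket {C : numClosedFieldType} {m : nat} (i : 'I_m) : 'cV[C]_m := delta_mx i 0.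
Definition bra {C : numClosedFieldType} {m : nat} (i : 'I_m) : 'rV[C]_m := delta_mx 0 i.

Lemma pow2_gt0 (n : nat) : (0 < 2 ^ n)%N.
Proof. by rewrite expn_gt0. Qed.
Definition zidx (n : nat) : 'I_(2 ^ n) := Ordinal (pow2_gt0 n).

Lemma pow2_le_double (n : nat) : (2 ^ n <= 2 * 2 ^ n)%N.
Proof. by rewrite leq_pmull. Qed.
Definition lowidx (n : nat) (i : 'I_(2 ^ n)) : 'I_(2 * 2 ^ n) :=
  widen_ord (pow2_le_double n) i.

(* Main.v *)
Require Import Defs.
From mathcomp Require Import all_boot all_order all_algebra.
Import GRing.Theory Num.Theory.
Local Open Scope ring_scope.

Section S.
Variable C : numClosedFieldType.

Lemma mx11E (X : 'M[C]_1) : X = (X 0 0)%:M.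
Proof. by apply/matrixP=> a b; rewrite [a]ord1 [b]ord1 !mxE eqxx mulr1n. Qed.

Lemma tens11 (x y : C) : ((x%:M : 'M[C]_1) *t (y%:M : 'M[C]_1)) = (x * y)%:M.
Proof.
apply/matrixP=> a b; rewrite [a]ord1 [b]ord1 !mxE !eqxx /=.
by rewrite !mulr1n.
Qed.

Lemma bra_ket m p (M : 'M[C]_(m, p)) a b :
  bra a *m (M *m ket b) = (M a b)%:M.
Proof.
rewrite mulmxA /bra -rowE /ket -colE.
by apply/matrixP=> x y; rewrite [x]ord1 [y]ord1 !mxE.
Qed.

Lemma mid_delta m (u : 'rV[C]_m) (v : 'cV[C]_m) k :
  u *m (delta_mx k k *m v) = (u 0 k * v k 0)%:M.
Proof.
rewrite -(mul_delta_mx (0 : 'I_1)) -!mulmxA mulmxA -colE -rowE.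
apply/matrixP=> x y; rewrite [x]ord1 [y]ord1 !mxE big_ord1 !mxE /=.
by rewrite mulr1n.
Qed.
Lemma hadamard_row0 n (a b : 'I_(2 ^ n)) :
  val a = 0%N -> hadamard_pow C n a b = (sqrtC 2)^-1 ^+ n.
Proof.
elim: n a b => [|n IH] a b ha.
  rewrite /= mxE (_ : a == b) //; apply/eqP/val_inj; rewrite ha.
  by have : (val b < 1)%N := ltn_ord b; rewrite ltnS leqn0 => /eqP ->.
rewrite /= castmxE mxE /hadamard mxE mxE /= IH /=; last by rewrite ha mod0n.
case: ifP => [/andP[/eqP h _]|_]; last by rewrite mulr1 exprS.
by move: h; rewrite ha div0n.
Qed.

Lemma hadamard_col0 n (a b : 'I_(2 ^ n)) :
  val b = 0%N -> hadamard_pow C n a b = (sqrtC 2)^-1 ^+ n.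
Proof.
elim: n a b => [|n IH] a b ha.
  rewrite /= mxE (_ : a == b) //; apply/eqP/val_inj; rewrite ha.
  by have : (val a < 1)%N := ltn_ord a; rewrite ltnS leqn0 => /eqP ->.
rewrite /= castmxE mxE /hadamard mxE mxE /= IH /=; last by rewrite ha mod0n.
case: ifP => [/andP[_ /eqP h]|_]; last by rewrite mulr1 exprS.
by move: h; rewrite ha div0n.
Qed.
Lemma shift_ket m (hm : (0 < m)%N) k (b : 'I_m) :
  downshift C m ^+ k *m ket b = ket (Ordinal (ltn_pmod (b + k) hm)).
Proof.
elim: k b => [|k IH] b.
  rewrite expr0 mul1mx; congr ket; apply/val_inj; by rewrite /= addn0 modn_small.
rewrite exprSr -mulmxE -mulmxA.
have -> : downshift C m *m ket b = ket (Ordinal (ltn_pmod (b + 1) hm)).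
  rewrite /ket -colE; apply/matrixP=> x y; rewrite [y]ord1 !mxE /= andbT addn1.
  have -> : (x == Ordinal (ltn_pmod b.+1 hm)) = (val x == b.+1 %% m)%N by [].
  by case: eqP.
apply: etrans (IH _) _; congr ket; apply/val_inj; by rewrite /= modnDml addn1 addSn addnS.
Qed.
Lemma bra_ket1 m (a c : 'I_m) : bra a *m ket c = ((a == c)%:R)%:M :> 'M[C]_1.
Proof. by rewrite -[ket c]mul1mx bra_ket mxE. Qed.

Lemma sum_scal m (I : finType) (F : I -> C) :
  \sum_(k : I) (F k)%:M = (\sum_k F k)%:M :> 'M[C]_m.
Proof. by rewrite raddf_sum. Qed.
End S.

Lemma count_ind N (i j : 'I_N) :
  (\sum_(k < N) ((val i == val j + k)%N : nat))%N = (j <= i)%N.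
Proof.
case: (leqP j i) => hji.
  have hk : (i - j < N)%N by apply: leq_ltn_trans (leq_subr _ _) (ltn_ord i).
  rewrite (bigD1 (Ordinal hk)) //= subnKC // eqxx big1 // => k hk'.
  apply/eqP; rewrite eqb0; apply/negP => /eqP e; move/negP: hk'; apply.
  by apply/eqP/val_inj => /=; rewrite e addKn.
rewrite big1 // => k _; apply/eqP; rewrite eqb0; apply/negP => /eqP e.
by move: hji; rewrite e ltnNge leq_addr.
Qed.

Theorem theorem9 (C : numClosedFieldType) (n : nat) (hn : (1 <= n)%N)
    (i j : 'I_(2 ^ n)) :
  (bra (zidx n) *t bra (lowidx i)) *m UL C n *m (ket (zidx n) *t ket (lowidx j))
  = (((2 ^ n)%:R)^-1 * lower_ones C (2 ^ n) i j)%:M.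
Proof.
rewrite /UL /Zblock !(mulmx_suml, mulmx_sumr).
under eq_bigr => k _ do rewrite !mulmxA !tensmx_mul !mulmx1.
have hm : (0 < 2 * 2 ^ n)%N by rewrite muln_gt0 expn_gt0.
under eq_bigr => k _ do rewrite -!mulmxA shift_ket bra_ket1 (mulmxA (bra _)) /bra -rowE /ket -colE mid_delta !mxE tens11.
under eq_bigr => k _.
  rewrite hadamard_row0 // hadamard_col0 //.
  rewrite (_ : (lowidx i == _) = (val i == val j + k)%N); last first.
    rewrite -val_eqE /= modn_small //.
    rewrite mul2n -addnn -addSn; apply: leq_add; [exact: ltn_ord | exact: ltnW (ltn_ord k)].
  over.
rewrite sum_scal -mulr_sumr -natr_sum count_ind mxE.
congr (_ %:M); congr (_ * _); last by case: (j <= i)%N.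
by rewrite -exprMn -expr2 exprVn sqrtCK natrX exprVn.
Qed.
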